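(* Consider the augmenting-path algorithm for online generalized network flow with resulting flows $x^{(0)},x^{(1)},\dots,x^{(T)}$. Let $t\in[T]$ and let $v$ be a vertex of the graph at time $t-1$. Then $\mathrm{height}_t(v)\ge\mathrm{height}_{t-1}(v)$.
   Context: Generalized network flow instance: digraph $G=(V,E)$ without anti-parallel edges, sources with no incoming edges, sink $\tau$ with no outgoing edges, edge capacities $\mu_e>0$, costs $c_e>0$, gains $\gamma_e>0$; convention: every vertex $v\ne\tau$ has a dummy edge $v\tau$ of infinite capacity, gain $1$ and sufficiently large cost $B$. Online generalized network flow: sources $s_1,\dots,s_T$ (each with supply $1$) arrive one at a time with their outgoing edges. Residual graph $G^x$ for $x$ with $0\le x_e\le\mu_e$: forward edge $uv$ (capacity $\mu_{uv}-x_{uv}$, cost $c_{uv}$, gain $\gamma_{uv}$) if $x_{uv}<\mu_{uv}$; backward edge $vu$ (capacity $\gamma_{uv}x_{uv}$, cost $0$, gain $1/\gamma_{uv}$) if $x_{uv}>0$. A fractional augmenting path from $s\neq\tau$ in $G^x$ is $f\ge0$ on the residual edges with out-minus-gain-weighted-in flow equal to $1$ at $s$ and $0$ at every vertex other than $s,\tau$; cost $\sum_e c^x_ef_e$. It is an augmenting path if its support is a path from $s$ to $\tau$, or a cycle through $s$ avoiding $\tau$, or a cycle avoiding $s,\tau$ together with a path from $s$ to the cycle internally disjoint from it. Augmenting $x$ by $\theta$ units using $f$: for each forward residual edge $uv$ set $x_{uv}\gets x_{uv}+\theta f_{uv}$, and for each backward residual edge $vu$ set $x_{uv}\gets x_{uv}-\theta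 f_{vu}/\gamma_{uv}$. The algorithm: $x^{(0)}=0$; at time $t$, add $s_t$ and its edges, set $x\gets x^{(t-1)}$ (zero on new edges), and while $\sum_{e\in\delta^+(s_t)}x_e<1$, find a cheapest augmenting path $f$ from $s_t$ in $G^x$, let $\theta>0$ be the largest value such that augmenting by $\theta$ using $f$ keeps $x_e\in[0,\mu_e]$ for all $e$ and $\sum_{e\in\delta^+(s_t)}x_e\le1$, and augment; finally $x^{(t)}\gets x$. For a vertex $v\ne\tau$ present at time $t$, $\mathrm{height}_t(v)$ is the minimum cost of an augmenting path from $v$ in $G^{x^{(t)}}$; $\mathrm{height}_t(\tau)=0$. *)

(* Defs.v *)
From HB Require Import structures.
From mathcomp Require Import all_boot all_order all_algebra.
Set Implicit Arguments. Unset Strict Implicit. Unset Printing Implicit Defensive.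
Import Order.TTheory GRing.Theory Num.Theory.
Local Open Scope ring_scope.

(* The whole graph (over all
   times) is given; vertex [src i] (i : 'I_T) is the source s_{i+1}, arriving at
   time i+1.  Edges are indexed by a finite type [E]; capacity [None] means
   infinite capacity (used for the dummy edges v -> tau). *)
Record gnf (R : realFieldType) := GNF {
  V : finType;
  E : finType;
  tail : E -> V;
  head : E -> V;
  tau : V;
  mu : E -> option R;
  cost : E -> R;
  gain : E -> R;
  Bcost : R;
  T : nat;
  src : 'I_T -> V
}.

Section GNF.
Variable R : realFieldType.
Variable I : gnf R.

Local Notation V := (V I).
Local Notation E := (E I).
Local Notation tail := (@tail R I).
Local Notation head := (@head R I).
Local Notation tau := (tau I).
Local Notation mu := (@mu R I).
Local Notation cost := (@cost R I).
Local Notation gain := (@gain R I).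
Local Notation B := (Bcost I).
Local Notation T := (T I).
Local Notation src := (@src R I).

Definition wf_instance : Prop :=
  injective src /\
  (forall i, src i != tau) /\
  (forall e i, head e != src i) /\
  (forall e, tail e != tau) /\
  (forall e, tail e != head e) /\
  (forall e f, ~~ ((tail e == head f) && (head e == tail f))) /\
  (forall e, 0 < cost e /\ 0 < gain e) /\
  (forall e m, mu e = Some m -> 0 < m) /\
  0 < B /\
  (forall v, v != tau -> exists e,
      [/\ tail e = v, head e = tau, mu e = None, gain e = 1 & cost e = B]) /\
  (forall e, mu e = None -> [/\ head e = tau, gain e = 1 & cost e = B]).

(* vertices present at time t: non-sources, and s_1,...,s_t *)
Definition present (t : nat) (v : V) : bool :=
  [forall i : 'I_T, (src i == v) ==> (i < t)%N].

Definition epresent (t : nat) (e : E) : bool :=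
  present t (tail e) && present t (head e).

(* Residual edges: (e, true) is the forward copy of e, (e, false) the backward. *)
Definition redge := (E * bool)%type.

Definition rtail (a : redge) : V := if a.2 then tail a.1 else head a.1.
Definition rhead (a : redge) : V := if a.2 then head a.1 else tail a.1.
Definition rcost (a : redge) : R := if a.2 then cost a.1 else 0.
Definition rgain (a : redge) : R := if a.2 then gain a.1 else (gain a.1)^-1.

Definition rexists (x : E -> R) (t : nat) (a : redge) : bool :=
  epresent t a.1 &&
  (if a.2 then (match mu a.1 with Some m => x a.1 < m | None => true end)
   else 0 < x a.1).

Definition netout (f : redge -> R) (w : V) : R :=
  \sum_(a : redge | rtail a == w) f a - \sum_(a : redge | rhead a == w) rgain a * f a.

Definition frac_aug (x : E -> R) (t : nat) (s : V) (f : redge -> R) : Prop :=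
  [/\ s != tau,
      (forall a, 0 <= f a),
      (forall a, f a != 0 -> rexists x t a) &
      (forall w, w != tau -> netout f w = (w == s)%:R)].

Definition aug_cost (f : redge -> R) : R := \sum_(a : redge) rcost a * f a.

Fixpoint walk (u : V) (p : seq redge) (w : V) : bool :=
  match p with
  | [::] => u == w
  | a :: p' => (rtail a == u) && walk (rhead a) p' w
  end.

Definition support_is (f : redge -> R) (p : seq redge) : Prop :=
  forall a, (f a != 0) = (a \in p).

Definition aug_path (x : E -> R) (t : nat) (s : V) (f : redge -> R) : Prop :=
  frac_aug x t s f /\
  [\/ exists p : seq redge,
        [/\ walk s p tau, uniq (s :: map rhead p) & support_is f p],
      exists p : seq redge,
        [/\ walk s p s, p != [::], uniq (map rhead p),
            tau \notin map rhead p & support_is f p] |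
      exists (P C : seq redge) (w : V),
        [/\ walk s P w, uniq (s :: map rhead P),
            walk w C w, C != [::] & uniq (map rhead C)] /\
        [/\ tau \notin map rhead C, s \notin map rhead C,
            (forall u, u \in s :: map rhead P -> u \in map rhead C -> u = w) &
            support_is f (P ++ C)]].

Definition cheapest_aug (x : E -> R) (t : nat) (s : V) (f : redge -> R) : Prop :=
  aug_path x t s f /\ forall g, aug_path x t s g -> aug_cost f <= aug_cost g.

Definition is_height (x : E -> R) (t : nat) (v : V) (h : R) : Prop :=
  if v == tau then h = 0
  else (exists f, aug_path x t v f /\ aug_cost f = h) /\
       (forall f, aug_path x t v f -> h <= aug_cost f).

Definition augment (x : E -> R) (theta : R) (f : redge -> R) : E -> R :=
  fun e => x e + theta * f (e, true) - theta * f (e, false) / gain e.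

Definition outflow (x : E -> R) (s : V) : R := \sum_(e : E | tail e == s) x e.

Definition feasible (x : E -> R) : Prop :=
  (forall e, 0 <= x e) /\ (forall e m, mu e = Some m -> x e <= m).

Definition theta_ok (y : E -> R) (s : V) (f : redge -> R) (th : R) : Prop :=
  feasible (augment y th f) /\ outflow (augment y th f) s <= 1.

(* Step of the algorithm at time i+1 (source s_{i+1} = src i): from x^{(i)} to
   x^{(i+1)} by a finite number of augmentations along cheapest augmenting paths,
   each by the largest feasible amount, while the outflow of s_{i+1} is < 1. *)
Definition alg_step (i : 'I_T) (x x' : E -> R) : Prop :=
  exists (n : nat) (ys : nat -> E -> R) (fs : nat -> redge -> R) (ths : nat -> R),
    [/\ ys 0%N = x, ys n = x', 1 <= outflow (ys n) (src i) &
        forall k, (k < n)%N ->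
          [/\ outflow (ys k) (src i) < 1,
              cheapest_aug (ys k) i.+1 (src i) (fs k),
              0 < ths k,
              theta_ok (ys k) (src i) (fs k) (ths k) &
              (forall th, 0 < th -> theta_ok (ys k) (src i) (fs k) th -> th <= ths k)] /\
          ys k.+1 = augment (ys k) (ths k) (fs k)].

Definition alg_run (x : nat -> E -> R) : Prop :=
  x 0%N = (fun _ => 0) /\ forall i : 'I_T, alg_step i (x i) (x i.+1).

End GNF.

(* Main.v *)
Require Import Defs.
From mathcomp Require Import all_boot all_order all_algebra.
From mathcomp Require Import ring lra.
Set Implicit Arguments. Unset Strict Implicit. Unset Printing Implicit Defensive.
Import Order.TTheory GRing.Theory Num.Theory.
Local Open Scope ring_scope.

Section Dev.
Variable R : realFieldType.
Variable I : gnf R.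
Local Notation V := (V I).
Local Notation E := (E I).
Local Notation redge := (redge I).
Local Notation tau := (tau I).
Local Notation rh := (@rhead R I).

Lemma netoutD (f g : redge -> R) w :
  netout (fun a => f a + g a) w = netout f w + netout g w.
Proof.
rewrite /netout !big_split /=.
have -> : \sum_(a | rhead a == w) rgain a * (f a + g a) =
   \sum_(a | rhead a == w) rgain a * f a + \sum_(a | rhead a == w) rgain a * g a.
  by rewrite -big_split; apply: eq_bigr => a _; rewrite mulrDr.
by rewrite opprD addrACA.
Qed.

Lemma netoutZ (k : R) (f : redge -> R) w :
  netout (fun a => k * f a) w = k * netout f w.
Proof.
rewrite /netout mulrBr !mulr_sumr; congr (_ - _).
by apply: eq_bigr => a _; rewrite mulrCA.
Qed.

Lemma netout0 w : netout (fun _ : redge => 0) w = 0.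
Proof. by rewrite /netout !big1 ?subr0 // => a _; rewrite mulr0. Qed.

Definition ind (a : redge) : redge -> R := fun b => (b == a)%:R.

Lemma sum_ind (T0 : finType) (P : pred T0) (F : T0 -> R) a :
  \sum_(b | P b) F b * (b == a)%:R = (P a)%:R * F a.
Proof.
case: (boolP (P a)) => Pa.
  rewrite (bigD1 a) //= eqxx mulr1 mul1r big1 ?addr0 // => b /andP [_ /negbTE ->].
  by rewrite mulr0.
rewrite mul0r big1 // => b Pb; case: eqP => [eba|]; last by rewrite mulr0.
by move: Pa; rewrite -eba Pb.
Qed.

Lemma netout_ind a w :
  netout (ind a) w = (rtail a == w)%:R - rgain a * (rhead a == w)%:R.
Proof.
rewrite /netout /ind; congr (_ - _).
  rewrite (eq_bigr (fun b => 1 * (b == a)%:R)) ?sum_ind ?mulr1 // => b _.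
  by rewrite mul1r.
by rewrite sum_ind mulrC.
Qed.

Definition W (q : seq redge) : redge -> R :=
  foldr (fun a acc b => ind a b + rgain a * acc b) (fun _ => 0) q.
Definition Acost (q : seq redge) : R := foldr (fun a acc => rcost a + rgain a * acc) 0 q.
Definition Gam (q : seq redge) : R := foldr (fun a acc => rgain a * acc) 1 q.

Lemma netout_W q u z w : walk u q z ->
  netout (W q) w = (u == w)%:R - Gam q * (z == w)%:R.
Proof.
elim: q u => [|a q IH] u /=.
  by move/eqP => ->; rewrite netout0 mul1r subrr.
case/andP => /eqP ta wq.
rewrite netoutD netoutZ netout_ind (IH _ wq) ta; ring.
Qed.

Lemma cost_W q : aug_cost (W q) = Acost q.
Proof.
elim: q => [|a q IH] /=; first by rewrite /aug_cost big1 // => b _; rewrite mulr0.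
rewrite /aug_cost /=.
rewrite (eq_bigr (fun b => rcost b * ind a b + rgain a * (rcost b * W q b))); last first.
  by move=> b _; rewrite mulrDr mulrCA.
rewrite big_split /= -mulr_sumr -/(aug_cost (W q)) IH; congr (_ + _).
rewrite /ind (eq_bigr (fun b => rcost b * (b == a)%:R)) // sum_ind.
by rewrite mul1r.
Qed.

Lemma Acost_cat p q : Acost (p ++ q) = Acost p + Gam p * Acost q.
Proof. by elim: p => [|a p IH] /=; [rewrite mul1r add0r | rewrite IH; ring]. Qed.

Lemma Gam_cat p q : Gam (p ++ q) = Gam p * Gam q.
Proof. by elim: p => [|a p IH] /=; [rewrite mul1r | rewrite IH mulrA]. Qed.

Hypothesis hgain : forall e : E, 0 < gain e.
Hypothesis hcost : forall e : E, 0 < cost e.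

Lemma hg (a : redge) : 0 < rgain a.
Proof. by rewrite /rgain; case: a.2 => //; rewrite invr_gt0. Qed.
Lemma hc (a : redge) : 0 <= rcost a.
Proof. by rewrite /rcost; case: a.2 => //; apply: ltW. Qed.

Lemma Gam_gt0 q : 0 < Gam q.
Proof. by elim: q => [|a q IH] //=; rewrite mulr_gt0 ?hg. Qed.

Lemma Acost_ge0 q : 0 <= Acost q.
Proof. by elim: q => [|a q IH] //=; rewrite addr_ge0 ?hc // mulr_ge0 // ltW ?hg. Qed.

Lemma W_ge0 q b : 0 <= W q b.
Proof.
elim: q => [|a q IH] //=; apply: addr_ge0; last by rewrite mulr_ge0 // ltW ?hg.
by rewrite /ind ler0n.
Qed.

Lemma W_neq0 q b : (W q b != 0) = (b \in q).
Proof.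
elim: q => [|a q IH] /=; first by rewrite eqxx.
rewrite in_cons /ind; case: (b =P a) => [->|ne] /=.
  have h1 : 0 <= rgain a * W q a := mulr_ge0 (ltW (hg a)) (W_ge0 q a).
  by apply/negbT/gt_eqF; lra.
by rewrite add0r mulf_eq0 negb_or gt_eqF ?hg.
Qed.


Lemma sum_part (g : V -> R) (F : redge -> R) (p : redge -> V) :
  \sum_w g w * \sum_(a | p a == w) F a = \sum_a g (p a) * F a.
Proof.
rewrite (partition_big p xpredT) //=; apply: eq_bigr => w _.
rewrite mulr_sumr; apply: eq_bigr => a /eqP <-; done.
Qed.

Definition slack (pi : V -> R) (a : redge) :=
  rcost a + rgain a * pi (rhead a) - pi (rtail a).

Lemma dual_id x t s f (pi : V -> R) : frac_aug x t s f -> pi tau = 0 ->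
  \sum_a f a * slack pi a = aug_cost f - pi s.
Proof.
case=> stau _ _ hn pt.
have H : \sum_w pi w * netout f w = pi s.
  rewrite (eq_bigr (fun w => pi w * (w == s)%:R)); last first.
    move=> w _; case: (w =P tau) => [->|/eqP wt]; first by rewrite pt !mul0r.
    by rewrite hn.
  by rewrite sum_ind mul1r.
have H2 : \sum_w pi w * netout f w =
   \sum_a pi (rtail a) * f a - \sum_a pi (rhead a) * (rgain a * f a).
  rewrite -!sum_part -sumrB; apply: eq_bigr => w _; by rewrite mulrBr.
rewrite /slack /aug_cost -H H2.
rewrite (eq_bigr (fun a => rcost a * f a + pi (rhead a) * (rgain a * f a)
   - pi (rtail a) * f a)); last by move=> a _; ring.
rewrite sumrB big_split /=; ring.
Qed.

Definition bellman (y : E -> R) t (pi : V -> R) :=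
  pi tau = 0 /\ forall a, rexists y t a -> 0 <= slack pi a.

Lemma sum_slack_ge0 y t s f pi : bellman y t pi -> frac_aug y t s f ->
  forall a, 0 <= f a * slack pi a.
Proof.
case=> _ hb [_ f0 fe _] a; case: (boolP (f a == 0)) => [/eqP ->|/fe ha].
  by rewrite mul0r.
by rewrite mulr_ge0 // hb.
Qed.

Lemma weak y t s f pi : bellman y t pi -> frac_aug y t s f -> pi s <= aug_cost f.
Proof.
move=> hb hf; have := dual_id hf hb.1.
have : 0 <= \sum_a f a * slack pi a by apply: sumr_ge0 => a _; exact: sum_slack_ge0 hb hf a.
move=> h1 h2; rewrite h2 in h1; lra.
Qed.

Lemma tight y t s f pi : bellman y t pi -> frac_aug y t s f ->
  aug_cost f = pi s -> forall a, f a != 0 -> slack pi a = 0.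
Proof.
move=> hb hf hc a fa.
have h0 : \sum_a f a * slack pi a = 0 by rewrite (dual_id hf hb.1) hc subrr.
have := psumr_eq0P (fun a _ => sum_slack_ge0 hb hf a) h0 (i := a) isT.
by move/eqP; rewrite mulf_eq0 (negbTE fa) /= => /eqP.
Qed.

Lemma bellman_augment y t s f pi th : bellman y t pi -> frac_aug y t s f ->
  aug_cost f = pi s -> 0 < th -> bellman (augment y th f) t pi.
Proof.
move=> hb hf hcf hth; split; first exact: hb.1.
have ti := tight hb hf hcf.
have [_ f0 fe _] := hf.
case=> e b hr; case: (boolP (rexists y t (e, b))) => [/hb.2 //|hn].
case: b hr hn => hr hn.
-
  have hF : f (e, false) != 0.
    apply/negP => /eqP hF0.
    move: hr hn; rewrite /rexists /=; case/andP => -> /=.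
    case: (mu e) => // m; rewrite /augment hF0 mulr0 mul0r subr0 => h1.
    rewrite -leNgt => h2.
    have : 0 <= th * f (e, true) by rewrite mulr_ge0 // ltW.
    move: h1 h2; set z := th * _; move=> h1 h2 h3; lra.
  have := ti _ hF; rewrite /slack /rcost /rgain /= add0r => h.
  have ep : pi (Defs.head e) = (gain e)^-1 * pi (Defs.tail e) by move: h => /=; lra.
  rewrite /slack /rcost /rgain /= ep mulrA mulfV ?gt_eqF // mul1r addrK ltW //.
- have hT : f (e, true) != 0.
    apply/negP => /eqP hT0.
    move: hr hn; rewrite /rexists /=; case/andP => -> /=.
    rewrite /augment hT0 mulr0 addr0 => h1; rewrite -leNgt => h2.
    have : 0 <= th * f (e, false) / gain e by rewrite !mulr_ge0 // ltW ?invr_gt0.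
    move: h1 h2; set z := th * _ / _; move=> h1 h2 h3; lra.
  have := ti _ hT; rewrite /slack /rcost /rgain /= => h.
  have ep : pi (Defs.tail e) = cost e + gain e * pi (Defs.head e) by move: h => /=; lra.
  rewrite /slack /rcost /rgain /= ep add0r mulrDr mulrA mulVf ?gt_eqF // mul1r.
  by rewrite addrK mulr_ge0 // ltW ?invr_gt0.
Qed.

Definition junc (u : V) (P : seq redge) := last u (map rh P).

Definition valid (y : E -> R) t (u : V) (P C : seq redge) : bool :=
  all (rexists y t) (P ++ C) &&
  (if C is [::] then walk u P tau && uniq (u :: map rh P)
   else [&& walk u P (junc u P), walk (junc u P) C (junc u P),
          uniq (u :: map rh P), uniq (map rh C),
          tau \notin u :: map rh P, tau \notin map rh C,
          all (fun z => (z \in map rh C) ==> (z == junc u P)) (u :: map rh P) &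
          Gam C < 1]).

Definition costf (P C : seq redge) : R :=
  if C is [::] then Acost P else Acost P + Gam P * Acost C / (1 - Gam C).

Definition can (P C : seq redge) : redge -> R :=
  if C is [::] then W P else fun b => W P b + (Gam P / (1 - Gam C)) * W C b.

Lemma can_aug y t u P C : u != tau -> valid y t u P C ->
  aug_path y t u (can P C) /\ aug_cost (can P C) = costf P C.
Proof.
move=> ut /andP [/allP hex hv].
case: C hex hv => [|c C'] hex hv.
  case/andP: hv => wk un; split; last by rewrite /= cost_W.
  have supp : support_is (W P) P by move=> a; rewrite W_neq0.
  split; last by apply: Or31; exists P.
  split => //; first exact: W_ge0.
    by move=> a; rewrite W_neq0 => ha; apply: hex; rewrite cats0.
  move=> w wt; rewrite (netout_W _ wk) (eq_sym u) (eq_sym tau) (negbTE wt).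
  by rewrite mulr0 subr0.
move: hex hv; set C := c :: C' => hex hv.
case/and5P: hv => wP wC uP uC /and4P [tP tC hall gl].
set z := junc u P in wP wC hall *.
have hcan : can P C = (fun b => W P b + (Gam P / (1 - Gam C)) * W C b) by [].
have g1 : 0 < 1 - Gam C by rewrite subr_gt0.
have k0 : 0 < Gam P / (1 - Gam C) by rewrite divr_gt0 // Gam_gt0.
have supp : support_is (can P C) (P ++ C).
  move=> a; rewrite mem_cat -!W_neq0.
  rewrite hcan paddr_eq0 ?W_ge0 //; last by rewrite mulr_ge0 ?W_ge0 // ltW.
  by rewrite negb_and mulf_eq0 negb_or (gt_eqF k0).
split; last first.
  rewrite /aug_cost hcan.
  rewrite (eq_bigr (fun b => rcost b * W P b + Gam P / (1 - Gam C) * (rcost b * W C b))); last first.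
    by move=> b _; rewrite mulrDr mulrCA.
  have hcf : costf P C = Acost P + Gam P * Acost C / (1 - Gam C) by [].
  rewrite big_split -mulr_sumr -!/(aug_cost _) !cost_W hcf.
  by rewrite mulrAC.
have fa : frac_aug y t u (can P C).
  split => //.
  - by move=> a; rewrite hcan; apply: addr_ge0; rewrite ?W_ge0 // mulr_ge0 ?W_ge0 // ltW.
  - by move=> a; rewrite supp => ha; apply: hex.
  move=> w wt; rewrite hcan netoutD netoutZ (netout_W _ wP) (netout_W _ wC) eq_sym.
  field; by rewrite gt_eqF.
split => //.
rewrite /z in wP wC hall; clear z hcan.
case: (P =P [::]) => [P0|Pn].
  by subst P; apply: Or32; exists C; rewrite /junc /= in wC *; split.
apply: Or33; exists P, C, (junc u P); split; first by [].
split => //.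
- apply/negP => uin.
  have := allP hall u (mem_head _ _); rewrite uin /= => /eqP ue.
  move: uP; rewrite /= ue /junc => /andP [/negP H _]; apply: H.
  by case: (P) Pn => // p P' _ /=; rewrite mem_last.
- by move=> v vin vC; apply/eqP; have := allP hall v vin; rewrite vC.
Qed.

Fixpoint allseqs n : seq (seq redge) :=
  if n is n'.+1 then [::] :: [seq a :: s | a <- enum {: redge}, s <- allseqs n']
  else [:: [::]].

Lemma mem_allseqs n s : (size s <= n)%N -> s \in allseqs n.
Proof.
elim: n s => [|n IH] [|a s] //=; rewrite ?in_cons ?eqxx // => hs.
apply/orP; right; apply: (allpairs_f (fun a s => a :: s)); first by rewrite mem_enum.
exact: IH.
Qed.

Lemma uniq_sizeV (s : seq V) : uniq s -> (size s <= #|V|)%N.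
Proof. by move/card_uniqP <-; exact: max_card. Qed.

Definition mn (x y : R) := if x <= y then x else y.

Lemma foldr_mn x0 L : [/\ foldr mn x0 L \in x0 :: L, foldr mn x0 L <= x0 &
  forall z, z \in L -> foldr mn x0 L <= z].
Proof.
elim: L => [|a L [IH1 IH2 IH3]] /=; first by split; rewrite ?mem_head.
rewrite /mn; case: ifP => h; split.
- by rewrite !in_cons eqxx orbT.
- exact: le_trans h IH2.
- move=> z; rewrite in_cons => /orP [/eqP ->|/IH3]; first by rewrite lexx.
  exact: le_trans h.
- by move: IH1; rewrite !in_cons => /orP [->|->]; rewrite ?orbT.
- exact: IH2.
- move=> z; rewrite in_cons => /orP [/eqP ->|/IH3 //].
  by apply: ltW; rewrite ltNge h.
Qed.

Definition cands y t u :=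
  [seq pc <- [seq (P, C) | P <- allseqs #|V|, C <- allseqs #|V|] | valid y t u pc.1 pc.2].
Definition costs y t u := [seq costf pc.1 pc.2 | pc <- cands y t u].
Definition hgt y t u : R :=
  if (u != tau) && present t u then foldr mn (head 0 (costs y t u)) (costs y t u) else 0.

Lemma valid_sizes y t u P C : valid y t u P C -> (size P <= #|V|)%N /\ (size C <= #|V|)%N.
Proof.
case/andP=> _; case: C => [|c C].
  case/andP => _ /uniq_sizeV /=; rewrite size_map => h; split => //; exact: ltnW.
case/and5P => _ _ /uniq_sizeV h1 /uniq_sizeV h2 _.
by rewrite /= size_map in h1; rewrite size_map in h2; split => //; exact: ltnW.
Qed.

Lemma mem_costs y t u P C : valid y t u P C -> costf P C \in costs y t u.
Proof.
move=> hv; have [h1 h2] := valid_sizes hv.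
apply: (map_f (fun pc => costf pc.1 pc.2) (x := (P, C))).
rewrite mem_filter hv /=.
by apply: (allpairs_f pair); apply: mem_allseqs.
Qed.

Lemma hgt_min y t u P C : u != tau -> present t u -> valid y t u P C ->
  hgt y t u <= costf P C.
Proof.
move=> ut pu hv; rewrite /hgt ut pu /=.
by have [_ _ ->] := foldr_mn (head 0 (costs y t u)) (costs y t u); last exact: mem_costs.
Qed.

Lemma hgt_att y t u P C : u != tau -> present t u -> valid y t u P C ->
  exists P' C', valid y t u P' C' /\ hgt y t u = costf P' C'.
Proof.
move=> ut pu hv; rewrite /hgt ut pu /=.
have hin := mem_costs hv.
have [h1 _ _] := foldr_mn (head 0 (costs y t u)) (costs y t u).
have : foldr mn (head 0 (costs y t u)) (costs y t u) \in costs y t u.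
  move: h1; rewrite in_cons => /orP [/eqP ->|//].
  by case: (costs y t u) hin => //= a l _; rewrite mem_head.
case/mapP => [[P' C']]; rewrite mem_filter /= => /andP [hv' _] ->.
by exists P', C'.
Qed.

Lemma walk_cat u p q w :
  walk u (p ++ q) w = walk u p (last u (map rh p)) && walk (last u (map rh p)) q w.
Proof.
elim: p u => [|a p IH] u /=; first by rewrite eqxx.
by rewrite IH andbA.
Qed.

Lemma walk_last u p w : walk u p w -> last u (map rh p) = w.
Proof. by elim: p u => [|a p IH] u /=; [move/eqP | case/andP => _ /IH]. Qed.

Lemma costf_ge0 y t u P C : valid y t u P C -> 0 <= costf P C.
Proof.
case/andP => _; case: C => [|c C] /=; first by rewrite Acost_ge0.
case/and5P => _ _ _ _ /and4P [_ _ _ gl].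
have g1 : 0 < 1 - rgain c * Gam C by rewrite subr_gt0.
apply: addr_ge0; first exact: Acost_ge0.
apply: mulr_ge0; last by rewrite invr_ge0 ltW.
apply: mulr_ge0; first exact/ltW/Gam_gt0.
exact: (Acost_ge0 (c :: C)).
Qed.

Lemma xy_bound (h S K G : R) : h <= S -> (G < 1 -> h <= K / (1 - G)) ->
  0 <= K -> 0 < G -> 0 <= S -> h <= K + G * S.
Proof.
move=> hS hX K0 G0 S0.
case: (lerP S (K + G * S)) => [le|lt]; first exact: le_trans hS le.
have G1 : G < 1.
  rewrite ltNge; apply/negP => G1.
  have : (1 - G) * S <= 0 by rewrite mulr_le0_ge0 // subr_le0.
  nra.
apply: le_trans (hX G1) _.
have g1 : 0 < 1 - G by rewrite subr_gt0.
rewrite ler_pdivrMr //; nra.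
Qed.

Lemma shortcut_gen y t (a : redge) u Q1 P2 C2 P C :
  u != tau -> present t u -> valid y t u P2 C2 ->
  (Gam (a :: Q1) < 1 -> valid y t u [::] (a :: Q1)) ->
  costf P C = Acost Q1 + Gam Q1 * costf P2 C2 ->
  hgt y t u <= rcost a + rgain a * costf P C.
Proof.
move=> ut pu vY vX hcf.
have -> : rcost a + rgain a * costf P C =
  (rcost a + rgain a * Acost Q1) + (rgain a * Gam Q1) * costf P2 C2.
  by rewrite hcf; ring.
apply: xy_bound.
- exact: hgt_min vY.
- move=> G1; have := hgt_min ut pu (vX G1).
  by rewrite /costf /= add0r mul1r.
- by apply: addr_ge0; [exact: hc | rewrite mulr_ge0 ?Acost_ge0 // ltW ?hg].
- by rewrite mulr_gt0 ?hg ?Gam_gt0.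
- exact: costf_ge0 vY.
Qed.

Lemma valid_prepend y t (a : redge) P C :
  rexists y t a -> rtail a != tau -> rtail a != rhead a ->
  rtail a \notin map rh P ++ map rh C -> valid y t (rhead a) P C ->
  valid y t (rtail a) (a :: P) C.
Proof.
move=> ha ut uw; rewrite mem_cat negb_or => /andP [nP nC] /andP [hall hv].
apply/andP; split; first by rewrite /= ha.
case: C hall hv nC => [|c C] hall hv nC.
  case/andP: hv => wk uq; rewrite /= eqxx wk /=.
  by move: uq => /= ->; rewrite andbT in_cons negb_or uw nP.
case/and5P: hv => wP wC uP uC /and4P [tP tC hl gl].
rewrite /junc /= in wP wC hl *.
apply/and5P; split => //=.
- by rewrite eqxx.
- by rewrite in_cons negb_or uw nP.
apply/and4P; split => //.
- by rewrite in_cons negb_or eq_sym ut.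
by rewrite /= (negbTE nC) /=.
Qed.

Lemma costf_prepend (a : redge) P C :
  costf (a :: P) C = rcost a + rgain a * costf P C.
Proof. by case: C => [|c C] //=; ring. Qed.

Lemma costf_cat Q P C : costf (Q ++ P) C = Acost Q + Gam Q * costf P C.
Proof. by case: C => [|c C]; rewrite /costf Acost_cat ?Gam_cat //; ring. Qed.

Lemma uniq_split (s t : seq V) x : uniq (s ++ x :: t) ->
  [/\ uniq (rcons s x), uniq (x :: t) & forall z, z \in t -> z \notin rcons s x].
Proof.
move=> H; have := H; rewrite cat_uniq => /and3P [_ _ u3].
move: H; rewrite -cat_rcons cat_uniq => /and3P [u1 hn u2]; split => //.
by move=> z zt; apply/negP => zs; move/hasPn: hn => /(_ z zt); rewrite zs.
Qed.

Lemma walk_split w P1 b P2 z : walk w (P1 ++ b :: P2) z ->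
  walk w (rcons P1 b) (rh b) /\ walk (rh b) P2 z.
Proof.
rewrite walk_cat /= => /and3P [h1 h2 h3]; split => //.
by rewrite -cats1 walk_cat h1 /= h2 eqxx.
Qed.

Lemma uniq_splitP w P1 b P2 : uniq (w :: map rh (P1 ++ b :: P2)) ->
  [/\ uniq (w :: map rh (rcons P1 b)), uniq (rh b :: map rh P2) &
     forall z, z \in map rh P2 -> z \notin w :: map rh (rcons P1 b)].
Proof.
rewrite map_cat /= => H.
have /uniq_split [h1 h2 h3] : uniq ((w :: map rh P1) ++ rh b :: map rh P2) by [].
by rewrite map_rcons -rcons_cons; split.
Qed.

Lemma caseB y t (a : redge) P1 b P2 C :
  rexists y t a -> rtail a = rh b -> rh b != tau -> rh b != rhead a ->
  valid y t (rhead a) (P1 ++ b :: P2) C ->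
  valid y t (rh b) P2 C /\
  (Gam (a :: rcons P1 b) < 1 -> valid y t (rh b) [::] (a :: rcons P1 b)).
Proof.
move=> ha tb ut uw /andP [hall hv].
have hallP := allP hall.
have hY : all (rexists y t) (P2 ++ C).
  by apply/allP => x hx; apply: hallP; rewrite -catA mem_cat /= in_cons hx !orbT.
have hX : all (rexists y t) ([::] ++ a :: rcons P1 b).
  rewrite /= ha /=; apply/allP => x; rewrite mem_rcons in_cons => hx.
  by apply: hallP; rewrite !mem_cat in_cons; case/orP: hx => ->; rewrite ?orbT.
have Xgen : walk (rhead a) (rcons P1 b) (rh b) -> uniq (rhead a :: map rh (rcons P1 b)) ->
    tau \notin rhead a :: map rh (rcons P1 b) ->
    Gam (a :: rcons P1 b) < 1 -> valid y t (rh b) [::] (a :: rcons P1 b).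
  move=> wk uq tn gl; rewrite /valid hX /= /junc /= eqxx tb eqxx wk /=.
  rewrite map_rcons in uq tn *; move: uq => /= ->; rewrite tn implybT /=.
  by move: gl => /= ->; rewrite in_cons eq_sym (negbTE ut).
case: C hall hallP hY hv => [|c C] hall hallP hY hv.
  case/andP: hv => /walk_split [wk1 wk2] /uniq_splitP [u1 u2 u3].
  split; first by rewrite /valid hY wk2 u2.
  apply: Xgen => //.
  have lt := walk_last wk2.
  have : tau \in map rh P2.
    have := mem_last (rh b) (map rh P2); rewrite lt in_cons => /orP [/eqP e|//].
    by move: ut; rewrite e eqxx.
  by move/u3.
case/and5P: hv => wP wC uP uC /and4P [tP tC hl gl].
move: wP; rewrite /junc map_cat last_cat /= => wP.
move/walk_split: (wP) => [wk1 wk2].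
move/uniq_splitP: uP => [u1 u2 u3].
split.
  have ej : junc (rhead a) (P1 ++ b :: P2) = last (rh b) (map rh P2).
    by rewrite /junc map_cat last_cat.
  rewrite ej in wC hl.
  rewrite /valid hY /junc wk2 wC u2 uC tC gl /= andbT.
  apply/andP; split.
    by apply: contra tP; rewrite !in_cons map_cat mem_cat /= in_cons => /orP [->|->]; rewrite ?orbT.
  apply/andP; split.
    by apply: (allP hl); rewrite in_cons map_cat mem_cat /= in_cons eqxx !orbT.
  apply/allP => z hz; apply: (allP hl).
  by rewrite in_cons map_cat mem_cat /= in_cons hz !orbT.
apply: Xgen => //.
apply: contra tP; rewrite map_rcons !in_cons mem_rcons in_cons map_cat mem_cat /= in_cons.
by case/orP => [->|/orP [->|->]]; rewrite ?orbT.
Qed.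

Lemma valid_cycE y t u P C : C != [::] -> valid y t u P C =
  all (rexists y t) (P ++ C) &&
  [&& walk u P (junc u P), walk (junc u P) C (junc u P),
      uniq (u :: map rh P), uniq (map rh C),
      tau \notin u :: map rh P, tau \notin map rh C,
      all (fun z => (z \in map rh C) ==> (z == junc u P)) (u :: map rh P) &
      Gam C < 1].
Proof. by case: C. Qed.

Lemma costf_cycE P C : C != [::] -> costf P C = Acost P + Gam P * Acost C / (1 - Gam C).
Proof. by case: C. Qed.

Lemma caseC y t (a : redge) P C1 b C2 :
  rexists y t a -> rtail a = rh b -> rh b != tau -> rh b != rhead a ->
  rh b \notin map rh P ->
  valid y t (rhead a) P (C1 ++ b :: C2) ->
  [/\ valid y t (rh b) [::] (C2 ++ rcons C1 b),
   (Gam (a :: (P ++ rcons C1 b)) < 1 -> valid y t (rh b) [::] (a :: (P ++ rcons C1 b))) &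
   costf P (C1 ++ b :: C2) =
     Acost (P ++ rcons C1 b) + Gam (P ++ rcons C1 b) * costf [::] (C2 ++ rcons C1 b)].
Proof.
move=> ha tb ut uw uP0.
have nC : C1 ++ b :: C2 != [::] by case: C1.
rewrite valid_cycE // => /andP [hall /and5P [wP wC uP uC /and4P [tP tC hl gl]]].
have hallP := allP hall.
set z := junc (rhead a) P in wP wC hl.
move/walk_split: (wC) => [wk1 wk2].
have lz := walk_last wk2.
have lzC := walk_last wC.
have [uc1 uc2 uc3] : [/\ uniq (rcons (map rh C1) (rh b)), uniq (rh b :: map rh C2) &
    forall q, q \in map rh C2 -> q \notin rcons (map rh C1) (rh b)].
  by apply: uniq_split; move: uC; rewrite map_cat.
have memC : forall x, x \in rcons C1 b -> x \in C1 ++ b :: C2.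
  by move=> x; rewrite mem_rcons mem_cat !in_cons; case/orP => ->; rewrite ?orbT.
have nR : C2 ++ rcons C1 b != [::] by case: (C2) => //=; case: (C1).
have gC : Gam (C2 ++ rcons C1 b) = Gam (C1 ++ b :: C2).
  by rewrite -cat_rcons !Gam_cat mulrC.
split.
- rewrite valid_cycE // /junc /= eqxx /=.
  apply/andP; split.
    apply/allP => x; rewrite mem_cat => /orP [h|h]; apply: hallP; rewrite mem_cat.
      by rewrite mem_cat in_cons h !orbT.
    by rewrite memC ?orbT.
  rewrite walk_cat lz wk2 wk1 /= gC gl andbT.
  have -> : map rh (C2 ++ rcons C1 b) = map rh C2 ++ rcons (map rh C1) (rh b).
    by rewrite map_cat map_rcons.
  rewrite uniq_catC.
  have -> : rcons (map rh C1) (rh b) ++ map rh C2 = map rh (C1 ++ b :: C2).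
    by rewrite cat_rcons map_cat.
  rewrite uC /=.
  rewrite implybT andbT !in_cons (eq_sym tau) (negbTE ut) /=.
  rewrite andbT; apply: contra tC; rewrite !mem_cat mem_rcons !in_cons /=.
  by rewrite map_cat mem_cat /= in_cons; case/or3P => ->; rewrite ?orbT.
- move=> gX; rewrite valid_cycE // /junc /= eqxx /= tb eqxx /=.
  apply/andP; split.
    rewrite ha /=; apply/allP => x; rewrite mem_cat => /orP [h|h]; apply: hallP.
      by rewrite mem_cat h.
    by rewrite mem_cat memC ?orbT.
  rewrite walk_cat wP -/z wk1 /=.
  move: gX => /= ->; rewrite implybT !andbT.
  have hu : uniq ((rhead a :: map rh P) ++ rcons (map rh C1) (rh b)).
    rewrite cat_uniq uP uc1 andbT /=.
    apply/hasPn => x hx; apply/negP => hxP.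
    have xC : x \in map rh (C1 ++ b :: C2).
      move: hx; rewrite map_cat mem_cat mem_rcons /= !in_cons.
      by case/orP => ->; rewrite ?orbT.
    have /eqP xz := implyP (allP hl x hxP) xC.
    have xu : x != rh b.
      by apply: contraNneq uP0 => e; move: hxP; rewrite e in_cons (negbTE uw).
    move: lzC; rewrite map_cat last_cat /= => lz2.
    have := mem_last (rh b) (map rh C2); rewrite lz2 -xz in_cons (negbTE xu) /= => /uc3.
    by rewrite hx.
  have ht : tau \notin (rhead a :: map rh P) ++ rcons (map rh C1) (rh b).
    rewrite mem_cat negb_or tP /=; apply: contra tC.
    by rewrite mem_rcons map_cat mem_cat /= !in_cons; case/orP => ->; rewrite ?orbT.
  have ht2 : tau \notin [:: rh b] by rewrite in_cons in_nil orbF eq_sym.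
  rewrite map_cat map_rcons ht2 /=.
  by move: hu ht => /= -> ->.
have g1 : 1 - Gam (C1 ++ b :: C2) != 0 by rewrite subr_eq0 eq_sym lt_eqF.
rewrite costf_cycE // costf_cycE // gC.
rewrite -cat_rcons !Acost_cat !Gam_cat /= add0r mul1r.
rewrite -cat_rcons !Gam_cat in g1.
field; by [].
Qed.

Lemma shortcut y t (a : redge) P C :
  rexists y t a -> rtail a != tau -> rtail a != rhead a -> present t (rtail a) ->
  valid y t (rhead a) P C -> hgt y t (rtail a) <= rcost a + rgain a * costf P C.
Proof.
move=> ha ut uw pu hv.
case: (boolP (rtail a \in map rh P ++ map rh C)) => hin; last first.
  have hv' := valid_prepend ha ut uw hin hv.
  by rewrite -costf_prepend; apply: hgt_min.
case: (boolP (rtail a \in map rh P)) => hP.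
  case/mapP: hP => b bP eb; case/splitPr: bP eb hv hin => P1 P2 eb hv hin.
  rewrite eb in ut uw pu *.
  have [vY vX] := caseB ha eb ut uw hv.
  apply: (shortcut_gen (Q1 := rcons P1 b) (P2 := P2) (C2 := C)) => //.
  by rewrite -cat_rcons costf_cat.
move: hin; rewrite mem_cat (negbTE hP) /= => /mapP [b bC eb].
case/splitPr: bC eb hv => C1 C2 eb hv.
rewrite eb in ut uw pu hP *.
have [vY vX hc'] := caseC ha eb ut uw hP hv.
exact: (shortcut_gen (Q1 := P ++ rcons C1 b) (P2 := [::]) (C2 := C2 ++ rcons C1 b)).
Qed.

Hypothesis hsrc : forall i, @src R I i != tau.
Hypothesis hdummy : forall v : V, v != tau -> exists e : E,
  [/\ Defs.tail e = v, Defs.head e = tau, mu e = None, gain e = 1 & cost e = Bcost I].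
Hypothesis htl : forall e : E, Defs.tail e != Defs.head e.

Lemma present_tau t : present t tau.
Proof. by apply/forallP => i; rewrite (negbTE (hsrc i)). Qed.

Lemma rtl_rhd (a : redge) : rtail a != rhead a.
Proof. by rewrite /rtail /rhead; case: a.2; rewrite // eq_sym. Qed.

Lemma rex_present y t (a : redge) : rexists y t a -> present t (rtail a) && present t (rhead a).
Proof.
by case/andP => /andP [h1 h2] _; rewrite /rtail /rhead; case: a.2; rewrite ?h1 ?h2.
Qed.

Lemma valid_single y t (a : redge) : rexists y t a -> rtail a != tau -> rhead a = tau ->
  valid y t (rtail a) [:: a] [::].
Proof.
move=> ha ut ht; rewrite /valid /= ha /= eqxx ht eqxx /=.
by rewrite in_cons in_nil orbF ut.
Qed.

Lemma valid_exists y t u : u != tau -> present t u -> exists P C, valid y t u P C.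
Proof.
move=> ut pu; have [e [te he me _ _]] := hdummy ut.
exists [:: (e, true)], [::]; rewrite -[u]te.
apply: valid_single.
- by rewrite /rexists /epresent /= te he pu present_tau me.
- by rewrite /rtail /= te.
- by [].
Qed.

Lemma hgt_ge0 y t u : 0 <= hgt y t u.
Proof.
case: (boolP ((u != tau) && present t u)) => [/andP [ut pu]|hn]; last first.
  by rewrite /hgt (negbTE hn).
have [P [C hv]] := valid_exists y ut pu.
have [P' [C' [hv' ->]]] := hgt_att ut pu hv.
exact: costf_ge0 hv'.
Qed.

Lemma hgt_bellman y t : bellman y t (hgt y t).
Proof.
split; first by rewrite /hgt eqxx.
move=> a ha; have /andP [pu pw] := rex_present ha.
rewrite /slack.
case: (rtail a =P tau) => [->|/eqP ut].
  rewrite /hgt eqxx /= subr0; apply: addr_ge0; first exact: hc.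
  by rewrite mulr_ge0 ?hgt_ge0 // ltW ?hg.
case: (rhead a =P tau) => [ht|/eqP wt].
  have := hgt_min ut pu (valid_single ha ut ht).
  by rewrite ht /hgt eqxx /= mulr0 addr0 subr_ge0.
have [P [C hv]] := valid_exists y wt pw.
have [P' [C' [hv' ->]]] := hgt_att wt pw hv.
by rewrite subr_ge0; apply: shortcut => //; apply: rtl_rhd.
Qed.

Lemma hgt_aug y t u : u != tau -> present t u ->
  exists f, aug_path y t u f /\ aug_cost f = hgt y t u.
Proof.
move=> ut pu; have [P [C hv]] := valid_exists y ut pu.
have [P' [C' [hv' ->]]] := hgt_att ut pu hv.
by exists (can P' C'); apply: can_aug.
Qed.

Lemma present_S t (u : V) : present t u -> present t.+1 u.
Proof.
move/forallP => h; apply/forallP => i; apply/implyP => hi.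
by have := implyP (h i) hi => /leqW.
Qed.

Lemma epresent_S t (e : E) : epresent t e -> epresent t.+1 e.
Proof. by case/andP => /present_S h1 /present_S h2; rewrite /epresent h1 h2. Qed.

Lemma run_zero (x : nat -> E -> R) : alg_run x ->
  forall j, (j <= T I)%N -> forall e, ~~ epresent j e -> x j e = 0.
Proof.
move=> [x0 hst]; elim=> [|j IH] hj e he; first by rewrite x0.
have hjT : (j < T I)%N by [].
have [n [ys [fs [ths [y0 yn _ hk]]]]] := hst (Ordinal hjT).
have he' : ~~ epresent j e by apply: contra he; exact: epresent_S.
suff : forall k, (k <= n)%N -> ys k e = x j e.
  move/(_ n (leqnn n)); rewrite yn => H.
  change (x (Ordinal hjT).+1 e = 0); rewrite H; apply: IH => //; exact: ltnW.
elim=> [|k IHk] hk'; first by rewrite y0.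
have [[_ [[[_ _ hfe _] _] _] _ _ _] hy] := hk k hk'.
have z : forall b, fs k (e, b) = 0.
  move=> b; case: (boolP (fs k (e, b) == 0)) => [/eqP //|/hfe /andP [hp _]].
  by rewrite hp in he.
rewrite hy /augment IHk; last exact: ltnW.
by rewrite !z mulr0 mul0r addr0 subr0.
Qed.

Lemma present_prev (i : 'I_(T I)) (u : V) : present i.+1 u -> u != src i -> present i u.
Proof.
move/forallP => h ne; apply/forallP => j; apply/implyP => /eqP hj.
have := implyP (h j) (introT eqP hj); rewrite ltnS leq_eqVlt => /orP [/eqP e|//].
by move: ne; rewrite -hj (_ : j = i) ?eqxx //; apply: val_inj.
Qed.

Lemma src_not_present (i : 'I_(T I)) : ~~ present i (src i).
Proof. by apply/negP => /forallP /(_ i); rewrite eqxx ltnn. Qed.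

Lemma shift_aug (x : E -> R) (i : 'I_(T I)) (v : V) g :
  (forall e j, Defs.head e != @src R I j) ->
  (forall e, ~~ epresent i e -> x e = 0) -> present i v ->
  aug_path x i.+1 v g -> aug_path x i v g.
Proof.
move=> hhead hz pv [[vt g0 ge hn] hstr]; split => //; split => //.
have hvs : v != src i by apply: contraNneq (src_not_present i) => <-.
have hrh : forall a, g a != 0 -> rhead a != src i.
  case=> e [] /ge; rewrite /rhead /= => // /andP [_ xp].
  apply/eqP => te; move: xp; rewrite hz ?ltxx //.
  by rewrite /epresent te (negbTE (src_not_present i)).
have hrt : forall a, g a != 0 -> rtail a != src i.
  move=> a ga; apply/eqP => ta.
  have := hn (src i) (hsrc i); rewrite eq_sym (negbTE hvs) /netout.
  have s2 : \sum_(b | rhead b == src i) rgain b * g b = 0.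
    apply: big1 => b /eqP hb; case: (boolP (g b == 0)) => [/eqP -> |/hrh]; first by rewrite mulr0.
    by rewrite hb eqxx.
  rewrite s2 subr0 => /eqP; apply/negP; rewrite gt_eqF //.
  rewrite (bigD1 a) ?ta //=; apply: ltr_pwDl.
    by rewrite lt_def ga g0.
  by apply: sumr_ge0 => b _; exact: g0.
move=> a ga; have := ge a ga; rewrite /rexists => /andP [/andP [h1 h2] ->].
rewrite andbT /epresent.
have := hrt a ga; have := hrh a ga; rewrite /rtail /rhead.
by case: a.2 => [] n1 n2; rewrite !present_prev.
Qed.

Lemma main_dev (x : nat -> E -> R) (i : 'I_(T I)) (v : V) (h_prev h_cur : R) :
  injective (@src R I) -> (forall e j, Defs.head e != @src R I j) ->
  alg_run x -> present i v -> is_height (x i) i v h_prev ->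
  is_height (x i.+1) i.+1 v h_cur -> h_prev <= h_cur.
Proof.
move=> hinj hhead run pv hp hcu.
rewrite /is_height in hp hcu; case: (v =P tau) => [ev|/eqP vt].
  by move: hp hcu; rewrite ev eqxx => -> ->.
rewrite (negbTE vt) in hp hcu.
have [_ hpmin] := hp; have [[fc [hfc cfc]] _] := hcu.
have pv1 : present i.+1 v := present_S pv.
have hz : forall e, ~~ epresent i e -> x i e = 0.
  exact: (run_zero run (ltnW (ltn_ord i))).
have ps : present i.+1 (src i).
  by apply/forallP => j; apply/implyP => /eqP /hinj ->.
have [n [ys [fs [ths [y0 yn _ hk]]]]] := run.2 i.
have base : h_prev <= hgt (x i) i.+1 v.
  have [g [hg' cg]] := hgt_aug (x i) vt pv1.
  by rewrite -cg; apply: hpmin; exact: shift_aug hhead hz pv hg'.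
suff : forall k, (k <= n)%N -> h_prev <= hgt (ys k) i.+1 v.
  move/(_ n (leqnn n)) => H; apply: le_trans H _.
  rewrite yn -cfc; exact: weak (hgt_bellman _ _) hfc.1.
elim=> [|k IH] hkn; first by rewrite y0.
have [[_ [hfk hcheap] th0 _ _] hy] := hk k hkn.
have hb := hgt_bellman (ys k) i.+1.
have ceq : aug_cost (fs k) = hgt (ys k) i.+1 (src i).
  apply/le_anti/andP; split; last exact: weak hb hfk.1.
  have [g [hg' cg]] := hgt_aug (ys k) (hsrc i) ps.
  by rewrite -cg; exact: hcheap.
have hb' := bellman_augment hb hfk.1 ceq th0; rewrite -hy in hb'.
have [g [hg' cg]] := hgt_aug (ys k.+1) vt pv1.
apply: le_trans (IH (ltnW hkn)) _; rewrite -cg.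
exact: weak hb' hg'.1.
Qed.

End Dev.

Theorem lemma2 (R : realFieldType) (I : gnf R) (x : nat -> E I -> R)
  (i : 'I_(T I)) (v : V I) (h_prev h_cur : R) :
  @wf_instance R I ->
  alg_run x ->
  present i v ->
  is_height (x i) i v h_prev ->
  is_height (x i.+1) i.+1 v h_cur ->
  h_prev <= h_cur.
Proof.
move=> [hinj [hsrc [hhead [_ [htl [_ [hcg [_ [_ [hdummy _]]]]]]]]]].
apply: main_dev => //.
- by move=> e; case: (hcg e).
- by move=> e; case: (hcg e).
Qed.
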